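(* Let $m$ be an integer and suppose $m=N_2(1+(x-1)^3h(x))$ for some $h\in\mathbb Z[x]$. Then there is $k\in\mathbb Z[x]$ with $m=N_1(1+(x-1)^3k(x))$, where $5\nmid k(1)$ if $5\nmid h(1)$, and $5\mid k(1)$ if $5\mid h(1)$.
   Context: For $j\geq1$, $\omega_j=e^{2\pi i/5^j}$ and $N_j(F)=\prod_{1\leq \ell\leq 5^j,\ 5\nmid \ell}F(\omega_j^\ell)$. *)

(* Defs.v *)
From mathcomp Require Import all_boot all_algebra.
From mathcomp Require Import reals trigo.
From mathcomp Require Export complex.
Import GRing.Theory Num.Theory.
Local Open Scope ring_scope.
Local Open Scope complex_scope.

Definition omega (R : realType) (j : nat) : R[i] :=
  (cos (2 * pi / (5 ^ j)%:R)) +i* (sin (2 * pi / (5 ^ j)%:R)).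

Definition Nj (R : realType) (j : nat) (F : {poly int}) : R[i] :=
  \prod_(1 <= l < (5 ^ j).+1 | ~~ (5 %| l)%N)
     (map_poly (fun z : int => z%:~R : R[i]) F).[omega R j ^+ l].

(* Main.v *)
Require Import Defs.
From mathcomp Require Import all_boot all_algebra.
From mathcomp Require Import reals trigo.
From mathcomp Require Import complex.
From mathcomp Require Import ring lra zify.
From mathcomp Require Import order.
Import Order.TTheory GRing.Theory Num.Theory.
Local Open Scope ring_scope.

Section T.
Local Open Scope complex_scope.
Variable R : realType.
Definition cis (a : R) : R[i] := cos a +i* sin a.
Lemma cisD a b : cis a * cis b = cis (a + b).
Proof.
rewrite /cis cosD sinD.
apply/eqP; rewrite eq_complex /=. apply/andP; split; apply/eqP; ring.
Qed.
Lemma cisX a n : cis a ^+ n = cis (a *+ n).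
Proof.
elim: n => [|n IH]; first by rewrite /cis mulr0n cos0 sin0.
by rewrite exprS IH cisD mulrS.
Qed.
Lemma om2_5 : omega R 2 ^+ 5 = omega R 1.
Proof.
rewrite /omega -/(cis _) cisX /cis; congr (cos _ +i* sin _);
 rewrite !natrX -mulr_natr; field; rewrite ?pnatr_eq0 // ?expf_neq0 ?pnatr_eq0 //.

Qed.
Lemma om1_5 : omega R 1 ^+ 5 = 1.
Proof.
rewrite /omega -/(cis _) cisX /cis.
have -> : (2 * pi / (5 ^ 1)%:R) *+ 5 = pi *+ 2 :> R.
  by rewrite expn1 -mulr_natr mulr2n; field.
by rewrite cos2pi sin2pi.
Qed.
Lemma om1_neq1 : omega R 1 != 1.
Proof.
apply/negP => /eqP/(congr1 (@complex.Im R)) /=.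
have : 0 < sin (2 * pi / (5 ^ 1)%:R) :> R.
  apply: sin_gt0_pi; rewrite expn1; have := @pi_gt0 R; move=> h; rewrite mulr_gt0 ?divr_gt0 //=; lra.
by move=> H E; rewrite E ltxx in H.
Qed.
End T.
Section P.
Variable C : numClosedFieldType.
Local Notation iC := (fun z : int => z%:~R : C).

Lemma mapM (aR rR : nzRingType) (f : {rmorphism aR -> rR}) (p q : {poly aR}) :
  map_poly f (p * q) = map_poly f p * map_poly f q.
Proof. exact: (map_poly_is_multiplicative f).1. Qed.

Definition E (F : {poly int}) : {poly {poly int}} :=
  \prod_(i < 5) (F^:P \Po ((('X : {poly int}) ^+ i)%:P * 'X)).

Definition Ec (F : {poly int}) (w : C) : {poly C} :=
  map_poly (horner_eval w) (map_poly (map_poly iC) (E F)).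

Lemma Ec_eq F w : Ec F w = \prod_(i < 5) ((map_poly iC F) \Po ((w ^+ i)%:P * 'X)).
Proof.
rewrite /Ec /E !rmorph_prod; apply: eq_bigr => i _.
rewrite /= !map_comp_poly; congr (_ \Po _).
  rewrite !mapM /= !map_polyX !map_polyC /= rmorphXn /= map_polyX.
  by rewrite /horner_eval hornerXn.
rewrite -!map_poly_comp /=; apply: eq_map_poly => z /=.
by rewrite map_polyC /horner_eval hornerC.
Qed.

Lemma Ec_coef F w n : (Ec F w)`_n = (map_poly iC ((E F)`_n)).[w].
Proof. by rewrite /Ec !coef_map. Qed.

Lemma E1 F : map_poly (horner_eval 1) (E F) = F ^+ 5.
Proof.
rewrite /E rmorph_prod. rewrite (eq_bigr (fun _ => F)) ?prodr_const ?card_ord // => i _.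
rewrite /= map_comp_poly mapM /= map_polyX map_polyC /= /horner_eval hornerXn expr1n mul1r comp_polyXr.
apply/polyP => j; rewrite coef_map_id0 ?horner0 // coef_map /= hornerC. by [].
Qed.
End P.
Lemma prod25 (T : comRingType) (g : nat -> T) :
  \prod_(1 <= l < (5 ^ 2).+1 | ~~ (5 %| l)%N) g l =
  \prod_(0 <= l < 4) \prod_(0 <= i < 5) g (5 * i + l.+1)%N.
Proof.
rewrite -big_filter.
have -> : [seq l <- index_iota 1 (5 ^ 2).+1 | ~~ (5 %| l)%N] =
  [:: 1; 2; 3; 4; 6; 7; 8; 9; 11; 12; 13; 14; 16; 17; 18; 19; 21; 22; 23; 24]%N by [].
rewrite -big_allpairs_dep /=.
apply: perm_big. by [].
Qed.
Section G.
Variable C : numClosedFieldType.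
Variable e : C.
Hypothesis he5 : e ^+ 5 = 1.
Hypothesis he1 : e != 1.

Lemma emod n : e ^+ n = e ^+ (n %% 5).
Proof. by rewrite (expr_mod _ he5). Qed.

Lemma epow_ne1 k : (0 < k < 5)%N -> e ^+ k != 1.
Proof.
move=> hk; apply/eqP => ek; move/eqP: he1; apply.
have H : forall k', e ^+ (k * k') = 1 by move=> k'; rewrite exprM ek expr1n.
case: k hk ek H => [|[|[|[|[|k]]]]] // _ _ H.
- by move: (H 3%N); rewrite emod => h; exact: h.
- by move: (H 2%N); rewrite emod => h; exact: h.
- by move: (H 4%N); rewrite emod => h; exact: h.
Qed.

Lemma geo (w : C) : w ^+ 5 = 1 -> w != 1 -> \sum_(i < 5) w ^+ i = 0.
Proof.
move=> w5 w1; have := subrX1 w 5; rewrite w5 subrr => /esym/eqP.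
by rewrite mulf_eq0 subr_eq0 (negbTE w1) /= => /eqP.
Qed.

Lemma Tsum m : \sum_(l < 4) e ^+ (l.+1 * m) = if (5 %| m)%N then 4 else -1.
Proof.
have E : forall l, e ^+ (l.+1 * m) = (e ^+ m) ^+ l.+1.
  by move=> l; rewrite -exprM mulnC.
under eq_bigr do rewrite E.
case: ifP => h5.
  have -> : e ^+ m = 1 by rewrite emod (eqP h5) expr0.
  by under eq_bigr do rewrite expr1n; rewrite sumr_const card_ord.
have w1 : e ^+ m != 1.
  rewrite emod epow_ne1 // ltn_pmod // andbT lt0n.
  by move: h5; rewrite /dvdn => ->.
have := geo (e ^+ m) _ w1; rewrite -exprM mulnC exprM he5 expr1n => /(_ erefl).
rewrite big_ord_recl expr0 => /(congr1 (fun x => x - 1)) /=; rewrite sub0r addrAC subrr add0r => <-.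
by [].
Qed.
End G.

Section G2.
Variable C : numClosedFieldType.
Variable e : C.
Hypothesis he5 : e ^+ 5 = 1.
Hypothesis he1 : e != 1.
Local Notation iC := (fun z : int => z%:~R : C).

Definition gval (r : {poly int}) : int :=
  - \sum_(j < size r) r`_j * (if (5 %| j + 4)%N then 4 else -1).

Lemma hornerC_wide (r : {poly int}) (x : C) :
  (map_poly iC r).[x] = \sum_(j < size r) (r`_j)%:~R * x ^+ j.
Proof.
rewrite horner_coef size_map_inj_poly //; last exact: intr_inj.
by apply: eq_bigr => j _; rewrite coef_map.
Qed.

Lemma gvalP (r : {poly int}) (c : C) :
  (forall l, (l < 4)%N -> (map_poly iC r).[e ^+ l.+1] = c) ->
  c = (gval r)%:~R /\ (5 %| gval r - r.[1])%Z.
Proof.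
move=> H; split.
  have B1 : \sum_(l < 4) e ^+ (l.+1 * 4) * (map_poly iC r).[e ^+ l.+1] = - c.
    rewrite (eq_bigr (fun l : 'I_4 => e ^+ (l.+1 * 4) * c)); last by move=> l _; rewrite H.
    by rewrite -mulr_suml (@Tsum C e he5 he1) /= mulN1r.
  have B2 : \sum_(l < 4) e ^+ (l.+1 * 4) * (map_poly iC r).[e ^+ l.+1] = - (gval r)%:~R.
    under eq_bigr do rewrite hornerC_wide mulr_sumr.
    rewrite exchange_big /= /gval rmorphN opprK rmorph_sum /=.
    apply: eq_bigr => j _.
    rewrite (eq_bigr (fun l : 'I_4 => (r`_j)%:~R * e ^+ (l.+1 * (j + 4)))); last first.
      by move=> l _; rewrite mulrCA -exprM -exprD -mulnDr addnC.
    rewrite -mulr_sumr (@Tsum C e he5 he1) rmorphM /=.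
    by case: ifP.
  by apply: oppr_inj; rewrite -B1 B2.
rewrite /gval horner_coef.
have -> : \sum_(i < size r) r`_i * 1 ^+ i = \sum_(i < size r) r`_i.
  by apply: eq_bigr => i _; rewrite expr1n mulr1.
rewrite -opprD -big_split /= rpredN.
rewrite (eq_bigr (fun j : 'I_(size r) => 5 * (r`_j * (if (5 %| j + 4)%N then 1 else 0)))).
  by rewrite -mulr_sumr dvdz_mulr.
by move=> j _; case: ifP => _; ring.
Qed.
End G2.
Lemma prod_perm5 (T : comRingType) (C : ringType) (e : C) (he5 : e ^+ 5 = 1)
   (f : C -> T) (a b : nat) :
  (forall i j : nat, (i < 5)%N -> (j < 5)%N -> ((a * i + b) %% 5 = (a * j + b) %% 5)%N -> i = j) ->
  \prod_(i < 5) f (e ^+ (a * i + b)) = \prod_(i < 5) f (e ^+ i).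
Proof.
move=> H.
pose h (i : 'I_5) : 'I_5 := Ordinal (ltn_pmod (a * i + b) (isT : (0 < 5)%N)).
have hinj : injective h.
  by move=> i j /(congr1 val) /= /H hh; apply/val_inj/hh.
rewrite [RHS](reindex_inj hinj) /=; apply: eq_bigr => i _.
by rewrite (expr_mod _ he5).
Qed.

Lemma inj5 a b : (a == 1 \/ a == 2 \/ a == 3 \/ a == 4)%N ->
  forall i j : nat, (i < 5)%N -> (j < 5)%N -> ((a * i + b) %% 5 = (a * j + b) %% 5)%N -> i = j.
Proof.
move=> ha i j hi hj.
case: ha => [/eqP->|[/eqP->|[/eqP->|/eqP->]]]; lia.
Qed.

Lemma sum5 (C : nmodType) (a : nat -> C) M :
  \sum_(0 <= n < 5 * M) (if (5 %| n)%N then a n else 0) = \sum_(0 <= j < M) a (5 * j)%N.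
Proof.
elim: M => [|M IH]; first by rewrite !big_geq.
rewrite [RHS]big_nat_recr // -IH.
rewrite (big_cat_nat (n := 5 * M)); last by lia. 2: by [].
congr (_ + _).
have -> : (5 * M.+1 = (5 * M).+4.+1)%N by lia.
rewrite !big_nat_recr; try lia.
rewrite big_geq //.
have h1 : (5 %| (5*M).+1)%N = false by apply/negbTE/negP => hd; lia.
have h2 : (5 %| (5*M).+2)%N = false by apply/negbTE/negP => hd; lia.
have h3 : (5 %| (5*M).+3)%N = false by apply/negbTE/negP => hd; lia.
have h4 : (5 %| (5*M).+4)%N = false by apply/negbTE/negP => hd; lia.
rewrite h1 h2 h3 h4 dvdn_mulr // /=.
by rewrite !addr0 add0r.
Qed.

Lemma fermat5 (c : int) : exists t : int, c ^+ 5 = c + t *+ 5.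
Proof.
set q := (c %/ 5)%Z; set r := (c %% 5)%Z.
have hc : c = q * 5 + r by rewrite /q /r -divz_eq.
have r0 : 0 <= r by rewrite /r modz_ge0.
have r5 : r < 5 by rewrite /r ltz_pmod.
have [s hs] : exists s : int, r ^+ 5 - r = s *+ 5.
  clear hc; move: r0 r5; case: r => // n _; rewrite ltz_nat => hn.
  case: n hn => [|[|[|[|[|n]]]]] // _.
  - by exists 0.
  - by exists 0.
  - by exists 6.
  - by exists 48.
  - by exists 204.
exists (s + 5*q*r^+4 + 50*q^+2*r^+3 + 250*q^+3*r^+2 + 625*q^+4*r + 625*q^+5 - q).
apply/eqP; rewrite -subr_eq0; apply/eqP.
rewrite hc.
have -> : (q * 5 + r) ^+ 5 -
  (q * 5 + r + (s + 5 * q * r ^+ 4 + 50 * q ^+ 2 * r ^+ 3 + 250 * q ^+ 3 * r ^+ 2 + 625 * q ^+ 4 * r + 625 * q ^+ 5 - q) *+ 5)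
  = (r ^+ 5 - r) - s *+ 5 by ring.
by rewrite hs subrr.
Qed.

Lemma frob5 (F : {poly int}) : exists Q : {poly int}, F ^+ 5 = F \Po 'X^5 + Q *+ 5.
Proof.
elim/poly_ind: F => [|p c [Q IH]].
  by exists 0; rewrite expr0n /= comp_poly0 mul0rn addr0.
have [t ht] := fermat5 c.
have hc : (c%:P) ^+ 5 = c%:P + t%:P *+ 5 :> {poly int}.
  by rewrite -rmorphXn /= ht rmorphD rmorphMn.
exists (Q * 'X^5 + t%:P + ((p*'X)^+4*c%:P + 2*(p*'X)^+3*(c%:P)^+2 + 2*(p*'X)^+2*(c%:P)^+3 + (p*'X)*(c%:P)^+4)).
rewrite comp_polyD comp_polyM comp_polyX comp_polyC.
have -> : (p * 'X + c%:P) ^+ 5 = p ^+ 5 * 'X ^+ 5 + (c%:P) ^+ 5 +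
   ((p*'X)^+4*c%:P + 2*(p*'X)^+3*(c%:P)^+2 + 2*(p*'X)^+2*(c%:P)^+3 + (p*'X)*(c%:P)^+4) *+ 5 by ring.
rewrite IH hc; ring.
Qed.

Lemma prod5 (T : comRingType) (g : nat -> T) :
  \prod_(1 <= l < (5 ^ 1).+1 | ~~ (5 %| l)%N) g l = \prod_(0 <= l < 4) g l.+1.
Proof.
rewrite -big_filter.
have -> : [seq l <- index_iota 1 (5 ^ 1).+1 | ~~ (5 %| l)%N] = [:: 1; 2; 3; 4]%N by [].
by rewrite /index_iota /= !big_cons !big_nil.
Qed.

Local Notation iC := (fun x : int => x%:~R).
Theorem lemma3p3 (R : realType) (m : int) (h : {poly int}) :
  (m%:~R : R[i]) = Nj R 2 (1 + ('X - 1) ^+ 3 * h) ->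
  exists k : {poly int},
    (m%:~R : R[i]) = Nj R 1 (1 + ('X - 1) ^+ 3 * k)
    /\ (~~ (5 %| h.[1])%Z -> ~~ (5 %| k.[1])%Z)
    /\ ((5 %| h.[1])%Z -> (5 %| k.[1])%Z).
Proof.
move=> hm.
set F := 1 + ('X - 1) ^+ 3 * h.
pose e := omega R 1. pose z := omega R 2.
have e5 : e ^+ 5 = 1 := om1_5 R.
have e1 : e != 1 := om1_neq1 R.
have z5 : z ^+ 5 = e := om2_5 R.
pose N := size (E F).
pose c n := (Ec _ F e)`_n.
have Ecl : forall l, (l < 4)%N -> Ec _ F (e ^+ l.+1) = Ec _ F e.
  move=> l hl; rewrite !Ec_eq.
  under eq_bigr do rewrite -exprM -[(l.+1 * _)%N]addn0.
  apply: (prod_perm5 _ _ _ e5 (fun u => map_poly iC F \Po (u%:P * 'X)) l.+1 0%N).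
  by apply: inj5; case: l hl => [|[|[|[|]]]] //; auto.
have gv : forall n, c n = (gval (E F)`_n)%:~R /\ (5 %| gval (E F)`_n - ((E F)`_n).[1])%Z.
  by move=> n; apply: (gvalP _ _ e5 e1) => l hl; rewrite /c -!Ec_coef Ecl.
pose G : {poly int} := \poly_(j < N) gval ((E F)`_(5 * j)).
have cN : forall n, (N <= n)%N -> c n = 0.
  by move=> n hn; rewrite /c Ec_coef nth_default // map_poly0 horner0.
have Peval : forall x, (Ec _ F e).[x] = \prod_(i < 5) (map_poly iC F).[e ^+ i * x].
  move=> x; rewrite Ec_eq horner_prod; apply: eq_bigr => i _.
  by rewrite horner_comp hornerMX hornerC.
have Pinv : forall k x, (Ec _ F e).[e ^+ k * x] = (Ec _ F e).[x].
  move=> k x; rewrite !Peval.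
  have := prod_perm5 _ _ _ e5 (fun u => (map_poly iC F).[u * x]) 1 k (inj5 1 k (or_introl erefl)).
  move=> /= <-; apply: eq_bigr => i _.
  by rewrite mul1n exprD mulrA.
have sizeEc : (size (Ec _ F e) <= N)%N.
  exact: (leq_trans (size_poly _ _) (size_poly _ _)).
have Pexp : forall x, (Ec _ F e).[x] = \sum_(n < N) c n * x ^+ n.
  by move=> x; rewrite (horner_coef_wide _ sizeEc).
have Pfilt : forall x, (Ec _ F e).[x] = \sum_(n < N) (if (5 %| n)%N then c n * x ^+ n else 0).
  move=> x.
  have H5 : 5%:R * (Ec _ F e).[x] = 5%:R * \sum_(n < N) (if (5 %| n)%N then c n * x ^+ n else 0).
    transitivity (\sum_(k < 5) (Ec _ F e).[e ^+ k * x]).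
      by rewrite (eq_bigr (fun _ => (Ec _ F e).[x])) ?sumr_const ?card_ord ?mulr_natl // => k _; rewrite Pinv.
    under eq_bigr do rewrite Pexp.
    rewrite exchange_big mulr_sumr /=; apply: eq_bigr => n _.
    transitivity (c n * x ^+ n * \sum_(k < 5) (e ^+ k) ^+ n).
      by rewrite mulr_sumr; apply: eq_bigr => k _; rewrite exprMn; ring.
    have -> : \sum_(k < 5) (e ^+ k) ^+ n = if (5 %| n)%N then 5%:R else 0.
      rewrite big_ord_recl expr0 expr1n.
      under eq_bigr do rewrite -exprM.
      rewrite (Tsum _ _ e5 e1).
      by case: ifP => _; rewrite ?addrN // -[4]/(3.+1)%:R -natr1 ?natrS; ring.
    by case: ifP => _; rewrite ?mulr0 // mulrC.
  by apply: (mulfI _ H5); rewrite pnatr_eq0.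
have PG : forall x, (Ec _ F e).[x] = (map_poly iC G).[x ^+ 5].
  move=> x; rewrite Pfilt.
  transitivity (\sum_(0 <= n < 5 * N) (if (5 %| n)%N then c n * x ^+ n else 0)).
    rewrite -(big_mkord xpredT (fun n => if (5 %| n)%N then c n * x ^+ n else 0)).
    rewrite [RHS](big_cat_nat (n := N)) //=; last by rewrite leq_pmull.
    rewrite [X in _ = _ + X]big1_seq ?addr0 // => n /andP[_].
    rewrite mem_index_iota => /andP[hn _].
    by rewrite cN // mul0r if_same.
  rewrite sum5 big_mkord.
  have sG : (size (map_poly iC G : {poly R[i]}) <= N)%N.
    exact: (leq_trans (size_poly _ _) (size_poly _ _)).
  rewrite (horner_coef_wide _ sG); apply: eq_bigr => j _.
  rewrite coef_map coef_poly ltn_ord /= -exprM mulnC.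
  by rewrite (gv (j * 5)%N).1.
have [Q hQ] := frob5 F.
have GF : forall j, (5 %| G`_j - F`_j)%Z.
  move=> j.
  have Gj : G`_j = gval ((E F)`_(5 * j)).
    rewrite coef_poly; case: ltnP => // hj.
    rewrite nth_default; last by apply: (leq_trans hj); rewrite leq_pmull.
    by rewrite /gval size_poly0 big_ord0 oppr0.
  have E1j : ((E F)`_(5 * j)).[1] = (F ^+ 5)`_(5 * j).
    by rewrite -E1 coef_map.
  have FX : (F \Po 'X^5)`_(5 * j) = F`_j.
    by rewrite coef_comp_poly_Xn // dvdn_mulr // mulKn.
  have -> : G`_j - F`_j = (gval ((E F)`_(5 * j)) - ((E F)`_(5 * j)).[1]) + Q`_(5 * j) * 5.
    by rewrite Gj E1j hQ (coefD (F \Po _)) coefMn FX -mulr_natr; ring.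
  by rewrite rpredD ?(gv _).2 // dvdz_mull.
pose M' := maxn (size G) (size F).
pose A : {poly int} := \poly_(j < M') ((G`_j - F`_j) %/ 5)%Z.
have hGA : G = F + A *+ 5.
  apply/polyP => j; rewrite (coefD F) coefMn [in RHS]coef_poly; case: ifP => hj.
    by rewrite -[_ *+ 5]mulr_natr divzK ?GF // addrC subrK.
  move/negbT: hj; rewrite -leqNgt geq_max => /andP[h1 h2].
  by rewrite mul0rn addr0 !nth_default.
pose u : {poly int} := 'X - 1.
pose Phi : {poly int} := 1 + 'X + 'X^2 + 'X^3 + 'X^4.
pose cc : {poly int} := 1 - 2 * u + 2 * u ^+ 2.
pose dd : {poly int} := - (5 + 11 * u + 8 * u ^+ 2 + 2 * u ^+ 3).
have id5 : (5 : {poly int}) = Phi * cc + u ^+ 3 * dd by rewrite /Phi /cc /dd /u; ring.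
exists (h + dd * A).
set K := 1 + ('X - 1) ^+ 3 * (h + dd * A).
have GK : G = K + Phi * cc * A.
  by rewrite hGA /F /K -mulr_natl id5 /u; ring.
have Phi0 : forall l, (l < 4)%N -> (map_poly iC Phi).[e ^+ l.+1] = 0 :> R[i].
  move=> l hl.
  have w5 : (e ^+ l.+1) ^+ 5 = 1 by rewrite exprAC e5 expr1n.
  have w1 : e ^+ l.+1 != 1 by apply: (epow_ne1 _ _ e5 e1).
  have := geo _ _ w5 w1; rewrite !big_ord_recr big_ord0 /= => hs.
  apply: etrans _ hs; rewrite /Phi !rmorphD /= !map_polyXn map_polyX rmorph1 !hornerE.
  by rewrite expr0 expr1.
split.
  rewrite hm /Nj (prod25 _ (fun l => (map_poly iC F).[omega R 2 ^+ l])).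
  rewrite (prod5 _ (fun l => (map_poly iC K).[omega R 1 ^+ l])).
  apply: eq_big_nat => l /andP[_ hl].
  transitivity ((Ec _ F e).[z ^+ l.+1]).
    rewrite Peval big_mkord; apply: eq_bigr => i _.
    by rewrite exprD exprM z5.
  rewrite PG exprAC z5 GK rmorphD rmorphM rmorphM /= hornerD !hornerM.
  by rewrite (Phi0 l hl) !mul0r addr0.
have hk1 : (h + dd * A).[1] = h.[1] - 5 * A.[1].
  by rewrite hornerD hornerM /dd /u !hornerE; ring.
rewrite hk1; split => h5.
  apply/negP => hk; apply: (negP h5).
  have -> : h.[1] = (h.[1] - 5 * A.[1]) + A.[1] * 5 by ring.
  by rewrite rpredD // dvdz_mull.
by rewrite rpredB // dvdz_mulr.
Qed.
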